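(* Consider the regular partially labeled binary broadcasting tree $\text{Tree}_{k=2}(\theta,d,\delta)$ (see context), and let $\mu^{+}_{\ell_{T_{\leq t}(\rho)}}$ and $\mu^{-}_{\ell_{T_{\leq t}(\rho)}}$ be the distributions of the revealed labels $\ell_{T_{\leq t}(\rho)}$ conditionally on $\ell(\rho)=+$ and $\ell(\rho)=-$ respectively. Assume $\delta d>1$, $(1-\delta)\theta^2 d<1$, and $2\delta d\log\big(1+\frac{4\theta^2}{1-\theta^2}\big)<[1-(1-\delta)\theta^2 d]^2$. Then for any $t>0$, $$d_{\rm TV}^2\big(\mu^{+}_{\ell_{T_{\leq t}(\rho)}},\mu^{-}_{\ell_{T_{\leq t}(\rho)}}\big)\leq \frac{2\delta d\log\big(1+\frac{4\theta^2}{1-\theta^2}\big)}{1-(1-\delta)\theta^2 d},$$ and consequently $$\inf_\Phi\sup_{\ell(\rho)\in\{+,-\}}\mathbb{P}\big(\Phi(\ell_{T_{\leq t}(\rho)})\neq\ell(\rho)\big)\geq \frac12-C\Big\{\frac{\delta d\log\big(1+\frac{4\theta^2}{1-\theta^2}\big)}{1-(1-\delta)\theta^2 d}\Big\}^{1/2},$$ where the infimum is over all estimators $\Phi$ mapping the revealed labels of the depth-$t$ tree to $\{+,-\}$ and $C>0$ is a universal constant.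
   Context: $\text{Tree}_{k=2}(\theta,d,\delta)$ (regular version): a rooted tree in which every vertex has $d$ children, exactly $\delta d$ of which have revealed labels and $(1-\delta)d$ unlabeled. The root label $\ell(\rho)\in\{+,-\}$ is unrevealed; each child copies its parent's label with probability $\frac{1+\theta}{2}$ and takes the opposite label with probability $\frac{1-\theta}{2}$, independently, $0<\theta<1$. $\ell_{T_{\leq t}(\rho)}$ is the collection of revealed labels at depth $\leq t$. *)

(* Defs.v *)
From HB Require Import structures.
From mathcomp Require Import all_boot all_order all_algebra.
From mathcomp Require Import reals exp.
Set Implicit Arguments. Unset Strict Implicit. Unset Printing Implicit Defensive.
Import Order.TTheory GRing.Theory Num.Theory.
Local Open Scope ring_scope.

(* Vertices of the full d-ary tree truncated at depth t: a vertex at depth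
   k <= t is the sequence of child indices (in 'I_d) leading from the root. *)
Definition vtx (t d : nat) := {k : 'I_t.+1 & k.-tuple 'I_d}.

Definition vseq (t d : nat) (v : vtx t d) : seq 'I_d := tagged v.

Definition edge (t d : nat) (u v : vtx t d) : bool :=
  [exists i : 'I_d, rcons (vseq u) i == vseq v].

(* Among the d children of each vertex, those with index < m (m = delta*d)
   have revealed labels; the root is unrevealed. *)
Definition revealed (t d m : nat) (v : vtx t d) : bool :=
  if vseq v is x :: s then (last x s < m)%N else false.

Definition revV (t d m : nat) := {v : vtx t d | revealed m v}.

(* Observations: the revealed labels (true = +, false = -). *)
Definition obs (t d m : nat) := {ffun revV t d m -> bool}.

Definition kern (R : realType) (theta : R) (a b : bool) : R :=
  if a == b then (1 + theta) / 2 else (1 - theta) / 2.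

Definition weight (R : realType) (t d : nat) (theta : R) (sigma : bool)
    (l : {ffun vtx t d -> bool}) : R :=
  (\prod_(v : vtx t d | size (vseq v) == 0%N) (l v == sigma)%:R) *
  \prod_(u : vtx t d) \prod_(v : vtx t d | edge u v) kern theta (l u) (l v).

Definition mu (R : realType) (t d m : nat) (theta : R) (sigma : bool)
    (w : obs t d m) : R :=
  \sum_(l : {ffun vtx t d -> bool} | [forall r : revV t d m, l (val r) == w r])
     weight theta sigma l.

Definition dTV (R : realType) (t d m : nat) (theta : R) : R :=
  2^-1 * \sum_(w : obs t d m) `|mu theta true w - mu theta false w|.

Definition err (R : realType) (t d m : nat) (theta : R)
    (Phi : obs t d m -> bool) (sigma : bool) : R :=
  \sum_(w : obs t d m | Phi w != sigma) mu theta sigma w.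

(* Main.v *)
Require Import Defs.
From HB Require Import structures.
From mathcomp Require Import all_boot all_order all_algebra.
From mathcomp Require Import reals exp.
From mathcomp Require Import ring lra.
Set Implicit Arguments. Unset Strict Implicit. Unset Printing Implicit Defensive.
Import Order.TTheory GRing.Theory Num.Theory.
Local Open Scope ring_scope.

Lemma vseq_inj t d : injective (@vseq t d).
Proof.
move=> [k1 s1] [k2 s2]; rewrite /vseq /= => eq.
have ek : k1 = k2 by apply: val_inj; rewrite /= -(size_tuple s1) -(size_tuple s2) eq.
subst k2. have -> : s1 = s2 by apply: val_inj. by [].
Qed.

Lemma size_vseq t d (v : vtx t d) : (size (vseq v) <= t)%N.
Proof. by case: v => k s; rewrite /vseq /= size_tuple -ltnS. Qed.

Definition rootv t d : vtx t d :=
  existT (fun k : 'I_t.+1 => k.-tuple 'I_d) ord0 [tuple].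

Lemma vseq_root t d : vseq (rootv t d) = [::].
Proof. by []. Qed.

Definition chv t d (i : 'I_d) (v : vtx t d) : vtx t.+1 d :=
  existT (fun k : 'I_t.+2 => k.-tuple 'I_d) (@Ordinal t.+2 (tag v).+1 (ltn_ord (tag v)))
    (cons_tuple i (tagged v)).

Lemma vseq_chv t d i (v : vtx t d) : vseq (chv i v) = i :: vseq v.
Proof. by []. Qed.

Lemma size_take_lt t d (s : seq 'I_d) : (size (take t s) < t.+1)%N.
Proof. by rewrite size_take_min ltnS geq_minl. Qed.

Definition mkvd t d (s : seq 'I_d) : vtx t d :=
  existT (fun k : 'I_t.+1 => k.-tuple 'I_d) (Ordinal (size_take_lt t s))
    (in_tuple (take t s)).

Lemma vseq_mkvd t d (s : seq 'I_d) : vseq (mkvd t s) = take t s.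
Proof. by []. Qed.

Lemma mkvd_vseq t d (v : vtx t d) : mkvd t (vseq v) = v.
Proof. by apply: vseq_inj; rewrite vseq_mkvd take_oversize // size_vseq. Qed.

Definition fromV t d (v : vtx t.+1 d) : option ('I_d * vtx t d) :=
  if vseq v is i :: s then Some (i, mkvd t s) else None.

Definition toV t d (x : option ('I_d * vtx t d)) : vtx t.+1 d :=
  if x is Some (i, v) then chv i v else rootv t.+1 d.

Lemma fromVK t d : cancel (@fromV t d) (@toV t d).
Proof.
move=> v; apply: vseq_inj; rewrite /fromV.
case E: (vseq v) => [|i s] //=.
rewrite vseq_chv vseq_mkvd take_oversize //.
by have := size_vseq v; rewrite E.
Qed.

Lemma toVK t d : cancel (@toV t d) (@fromV t d).
Proof. by case=> [[i v]|] //=; rewrite /fromV vseq_chv mkvd_vseq. Qed.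

Lemma vtx_root_eq t d (v : vtx t d) : (size (vseq v) == 0%N) = (v == rootv t d).
Proof.
apply/idP/eqP => [|->] //; rewrite size_eq0 => /eqP E.
by apply: vseq_inj; rewrite E.
Qed.

Lemma edge_toV t d (x y : option ('I_d * vtx t d)) :
  edge (toV x) (toV y) =
  match x, y with
  | None, Some (j, v) => vseq v == [::]
  | Some (i, u), Some (j, v) => (i == j) && edge u v
  | _, _ => false
  end.
Proof.
case: x => [[i u]|]; case: y => [[j v]|] /=; rewrite /edge ?vseq_chv ?vseq_root.
- apply/existsP/andP => [[k /eqP]|[/eqP -> /existsP [k /eqP E]]].
    by rewrite rcons_cons => -[-> E]; split=> //; apply/existsP; exists k; rewrite E.
  by exists k; rewrite rcons_cons E.
- by apply/existsP => -[k /eqP]; rewrite rcons_cons.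
- apply/existsP/eqP => [[k /eqP /= [_ <-]] //|E]. by exists j; rewrite /= E.
- by apply/existsP => -[k /eqP].
Qed.

Lemma revealed_chv t d m i (v : vtx t d) :
  revealed m (chv i v) = if vseq v is [::] then (i < m)%N else revealed m v.
Proof. by rewrite /revealed vseq_chv; case: (vseq v). Qed.

Lemma revealed_root t d m : revealed m (rootv t d) = false.
Proof. by []. Qed.

Lemma big_opt (R : Type) (idx : R) (op : Monoid.com_law idx) (T : finType)
  (F : option T -> R) :
  \big[op/idx]_(o : option T) F o = op (F None) (\big[op/idx]_(i : T) F (Some i)).
Proof.
have Hp : perm_eq (index_enum (option T)) (None :: map Some (enum T)).
  apply: uniq_perm; first exact: index_enum_uniq.
    rewrite /= map_inj_uniq ?enum_uniq ?andbT; last exact: Some_inj.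
    by apply/mapP => -[].
  move=> o; rewrite mem_index_enum; case: o => [x|] //=.
  by rewrite in_cons /= mem_map ?mem_enum //; exact: Some_inj.
rewrite (perm_big _ Hp) big_cons big_map; congr (op _ _).
by rewrite -[RHS]big_enum.
Qed.

Lemma big_optP (R : Type) (idx : R) (op : Monoid.com_law idx) (T : finType)
  (P : pred (option T)) (F : option T -> R) :
  \big[op/idx]_(o | P o) F o =
  op (if P None then F None else idx) (\big[op/idx]_(i | P (Some i)) F (Some i)).
Proof. by rewrite big_mkcond big_opt [in RHS]big_mkcond. Qed.

Definition Ew (R : realType) t d (theta : R) (l : {ffun vtx t d -> bool}) : R :=
  \prod_(u : vtx t d) \prod_(v : vtx t d | edge u v) kern theta (l u) (l v).

Lemma weight_E (R : realType) t d (theta : R) sigma l :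
  weight theta sigma l = (l (rootv t d) == sigma)%:R * Ew theta l.
Proof.
have E : (fun v : vtx t d => size (vseq v) == 0%N) =1 pred1 (rootv t d).
  by move=> v; rewrite /= vtx_root_eq.
by rewrite /weight (eq_bigl _ _ E) big_pred1_eq.
Qed.

Definition subl t d (i : 'I_d) (l : {ffun vtx t.+1 d -> bool}) : {ffun vtx t d -> bool} :=
  [ffun v => l (chv i v)].

Lemma toV_bij t d : bijective (@toV t d).
Proof. exact: Bijective (@toVK t d) (@fromVK t d). Qed.

Lemma Ew_succ (R : realType) t d (theta : R) (l : {ffun vtx t.+1 d -> bool}) :
  Ew theta l = \prod_(i < d) (kern theta (l (rootv t.+1 d)) (l (chv i (rootv t d)))
                               * Ew theta (subl i l)).
Proof.
rewrite /Ew (reindex (@toV t d)) /=; last exact: onW_bij (toV_bij t d).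
under eq_bigr => x _.
  rewrite (reindex (@toV t d)) /=; last exact: onW_bij (toV_bij t d).
  rewrite (eq_bigl _ _ (fun y => edge_toV x y)).
  over.
rewrite big_opt /= big_optP /= mul1r.
rewrite (eq_big (fun p => xpredT p.1 && (vseq p.2 == [::]))
   (fun p => kern theta (l (rootv t.+1 d)) (l (chv p.1 p.2)))); last 2 first.
- by case.
- by case.
rewrite -(pair_big xpredT (fun v => vseq v == [::])
   (fun i v => kern theta (l (rootv t.+1 d)) (l (chv i v)))) /=.
under [X in X * _]eq_bigr => i _.
  have E : (fun v : vtx t d => vseq v == [::]) =1 pred1 (rootv t d).
    by move=> v; rewrite /= -vtx_root_eq size_eq0.
  rewrite (eq_bigl _ _ E) big_pred1_eq.
  over.
rewrite [RHS]big_split /=; congr (_ * _).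
rewrite (eq_bigr (fun p => \prod_(v | edge p.2 v)
      kern theta (subl p.1 l p.2) (subl p.1 l v))); last first.
  case=> i u _ /=; rewrite big_optP /= mul1r.
  rewrite (eq_big (fun p => (i == p.1) && edge u p.2)
     (fun p => kern theta (l (chv i u)) (l (chv p.1 p.2)))); last 2 first.
  - by case.
  - by case.
  rewrite -(pair_big (fun j => i == j) (fun v => edge u v)
     (fun j v => kern theta (l (chv i u)) (l (chv j v)))) /=.
  rewrite (big_pred1 i) //.
  by apply: eq_bigr => v _; rewrite !ffunE.
rewrite -(pair_big xpredT xpredT (fun i u => \prod_(v | edge u v)
      kern theta (subl i l u) (subl i l v))) /=.
by [].
Qed.

Definition glue t d (b : bool) (L : {ffun 'I_d -> {ffun vtx t d -> bool}}) :
  {ffun vtx t.+1 d -> bool} :=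
  [ffun v => if fromV v is Some (i, v') then L i v' else b].

Definition splitl t d (l : {ffun vtx t.+1 d -> bool}) :
  bool * {ffun 'I_d -> {ffun vtx t d -> bool}} :=
  (l (rootv t.+1 d), [ffun i => subl i l]).

Lemma glue_root t d b L : glue b L (rootv t.+1 d) = b.
Proof. by rewrite ffunE. Qed.

Lemma glue_chv t d b L i (v : vtx t d) : glue b L (chv i v) = L i v.
Proof. by rewrite ffunE -[chv i v]/(toV (Some (i, v))) toVK. Qed.

Lemma subl_glue t d b L i : subl i (@glue t d b L) = L i.
Proof. by apply/ffunP => v; rewrite ffunE glue_chv. Qed.

Lemma glue_bij t d : bijective (fun p => @glue t d p.1 p.2).
Proof.
exists (@splitl t d).
- case=> b L; rewrite /splitl /= glue_root; congr (_, _).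
  by apply/ffunP => i; rewrite ffunE subl_glue.
- move=> l; apply/ffunP => v; rewrite ffunE /splitl /=.
  rewrite -{2}(fromVK v); case: (fromV v) => [[i v']|] //=.
  by rewrite !ffunE.
Qed.

Lemma sum_lab (R : realType) t d (G : {ffun vtx t.+1 d -> bool} -> R) :
  \sum_l G l = \sum_(b : bool) \sum_(L : {ffun 'I_d -> {ffun vtx t d -> bool}}) G (glue b L).
Proof.
rewrite (reindex (fun p => @glue t d p.1 p.2)) /=; last exact: onW_bij (glue_bij t d).
by rewrite -(pair_big xpredT xpredT (fun b L => G (glue b L))).
Qed.

Lemma weight_glue (R : realType) t d (theta : R) sigma b L :
  weight theta sigma (@glue t d b L) =
  (b == sigma)%:R * \prod_(i < d) (kern theta b (L i (rootv t d)) * Ew theta (L i)).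
Proof.
rewrite weight_E glue_root Ew_succ; congr (_ * _); apply: eq_bigr => i _.
by rewrite glue_root glue_chv subl_glue.
Qed.

Lemma revealed_chv_rev t d m i (v : vtx t d) : revealed m v -> revealed m (chv i v).
Proof. move=> H; rewrite revealed_chv; case E: (vseq v) => //; by rewrite /revealed E in H. Qed.

Definition liftR t d m (i : 'I_d) (r : revV t d m) : revV t.+1 d m :=
  Sub (chv i (val r)) (revealed_chv_rev i (valP r)).

Definition bitR t d m (i : 'I_d) : option (revV t.+1 d m) :=
  insub (chv i (rootv t d)).

Definition bitw t d m (i : 'I_d) (w : obs t.+1 d m) : bool :=
  if bitR t m i is Some r then w r else true.

Definition wsub t d m (i : 'I_d) (w : obs t.+1 d m) : obs t d m :=
  [ffun r => w (liftR i r)].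

Definition consl t d m (l : {ffun vtx t d -> bool}) (w : obs t d m) : bool :=
  [forall r : revV t d m, l (val r) == w r].

Lemma val_liftR t d m i (r : revV t d m) : val (liftR i r) = chv i (val r).
Proof. by []. Qed.

Lemma bitR_Some t d m i r : bitR t m i = Some r -> val r = chv i (rootv t d).
Proof. by rewrite /bitR; case: insubP => // r0 _ Hv [<-]. Qed.

Lemma bitR_lt t d m (i : 'I_d) : (bitR t m i != None) = (i < m)%N.
Proof.
rewrite /bitR; case: insubP => [r0 Hp _|Hn] /=.
- by move: Hp; rewrite revealed_chv vseq_root => ->.
- by move: Hn; rewrite revealed_chv vseq_root => /negbTE ->.
Qed.

Lemma cons_glue t d m b L (w : obs t.+1 d m) :
  consl (glue b L) w =
  [forall i, (if bitR t m i is Some r then L i (rootv t d) == w r else true)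
              && consl (L i) (wsub i w)].
Proof.
apply/forallP/forallP.
- move=> H i; apply/andP; split.
    case E: (bitR t m i) => [r|] //.
    by move: (H r); rewrite (bitR_Some E) glue_chv.
  by apply/forallP => r'; move: (H (liftR i r')); rewrite val_liftR glue_chv ffunE.
- move=> H r.
  have Hr := valP r.
  have Ev : val r = toV (fromV (val r)) by rewrite fromVK.
  case E: (fromV (val r)) Ev => [[i v']|] Ev; last first.
    by move: Hr; rewrite Ev.
  rewrite Ev glue_chv.
  have/andP [H1 /forallP H2] := H i.
  case Ev' : (vseq v') => [|x s].
    have Er : v' = rootv t d by apply: vseq_inj; rewrite Ev'.
    subst v'.
    have Eb : bitR t m i = Some r by rewrite /bitR -[chv i _]/(toV (Some (i, rootv t d))) -Ev valK.
    by rewrite Eb in H1.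
  have Hv' : revealed m v' by move: Hr; rewrite Ev revealed_chv Ev'.
  move: (H2 (Sub v' Hv')); rewrite ffunE /=.
  suff -> : liftR i (Sub v' Hv' : revV t d m) = r by [].
  by apply: val_inj; rewrite val_liftR Ev.
Qed.

Lemma natr_forall (R : realType) (I : finType) (P : pred I) :
  ([forall i, P i]%:R : R) = \prod_i (P i)%:R.
Proof.
case: (boolP [forall i, P i]) => [/forallP H|].
  by rewrite big1 // => i _; rewrite H.
rewrite negb_forall => /existsP [i Hi].
by rewrite (bigD1 i) //= (negbTE Hi) mul0r.
Qed.

Lemma sum_bool_eq (R : realType) (x : bool) (g : bool -> R) :
  \sum_(c : bool) (x == c)%:R * g c = g x.
Proof. by rewrite big_bool; case: x; rewrite /= !(mul1r, mul0r, addr0, add0r). Qed.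

Definition Gc (R : realType) t d m (theta : R) (i : 'I_d) (sigma : bool)
    (x : bool * obs t d m) : R :=
  \sum_(c : bool) kern theta sigma c * (if (i < m)%N then (c == x.1)%:R else 1)
                  * mu theta c x.2.

Definition Psi t d m (w : obs t.+1 d m) : {ffun 'I_d -> bool * obs t d m} :=
  [ffun i => (bitw i w, wsub i w)].

Lemma mu_consl (R : realType) t d m (theta : R) sigma (w : obs t d m) :
  mu theta sigma w = \sum_l (consl l w)%:R * ((l (rootv t d) == sigma)%:R * Ew theta l).
Proof.
rewrite /mu big_mkcond; apply: eq_bigr => l _; rewrite -weight_E /consl.
by case: ifP; rewrite ?mul1r ?mul0r.
Qed.

Lemma mu_succ (R : realType) t d m (theta : R) sigma (w : obs t.+1 d m) :
  mu theta sigma w = \prod_(i < d) Gc theta i sigma (Psi w i).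
Proof.
rewrite mu_consl sum_lab (bigD1 sigma) //= [X in _ + X]big1 ?addr0; last first.
  by move=> b /negbTE nb; apply: big1 => L _; rewrite glue_root nb mul0r mulr0.
under [LHS]eq_bigr => L _.
  rewrite (cons_glue sigma L w) natr_forall.
  rewrite -(weight_E theta sigma (glue sigma L)) weight_glue eqxx mul1r -big_split /=.
  over.
rewrite -(bigA_distr_bigA (fun i (l : {ffun vtx t d -> bool}) =>
   ((if bitR t m i is Some r then l (rootv t d) == w r else true)
              && consl l (wsub i w))%:R *
       (kern theta sigma (l (rootv t d)) * Ew theta l))) /=.
apply: eq_bigr => i _.
rewrite /Gc ffunE /=.
under [RHS]eq_bigr => c _.
  rewrite mu_consl mulr_sumr.
  over.
rewrite exchange_big /=; apply: eq_bigr => l _.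
under eq_bigr => c _.
  rewrite mulrCA mulrA mulrCA.
  over.
rewrite /= sum_bool_eq.
have -> : (if bitR t m i is Some r then l (rootv t d) == w r else true) =
          (if (i < m)%N then l (rootv t d) == bitw i w else true).
  rewrite -(bitR_lt t m i) /bitw; by case: (bitR t m i).
case: (i < m)%N => /=; last by ring.
by case: (l _ == _) => /=; ring.
Qed.

Definition Psi_inv t d m (f : {ffun 'I_d -> bool * obs t d m}) : obs t.+1 d m :=
  [ffun r : revV t.+1 d m => if fromV (val r) is Some (i, v') then
      (if (insub v' : option (revV t d m)) is Some r' then (f i).2 r' else (f i).1)
    else false].

Lemma fromV_chv t d i (v : vtx t d) : fromV (chv i v) = Some (i, v).
Proof. exact: (toVK (Some (i, v))). Qed.

Lemma PsiK t d m (w : obs t.+1 d m) : Psi_inv (Psi w) = w.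
Proof.
apply/ffunP => r; rewrite ffunE.
have Hr := valP r.
have Ev : val r = toV (fromV (val r)) by rewrite fromVK.
case E: (fromV (val r)) Ev => [[i v']|] Ev; last by move: Hr; rewrite Ev.
case: insubP => [r' Hr' Hv|Hn].
  rewrite ffunE /= ffunE; congr (w _); apply: val_inj.
  by rewrite val_liftR Hv Ev.
rewrite ffunE /= /bitw.
case Ev' : (vseq v') => [|x s]; last first.
  by move: Hr Hn; rewrite Ev /= revealed_chv Ev' => ->.
have Er : v' = rootv t d by apply: vseq_inj; rewrite Ev'.
subst v'.
by rewrite /bitR -[chv i _]/(toV (Some (i, rootv t d))) -Ev valK.
Qed.

Lemma Psi_invK t d m (f : {ffun 'I_d -> bool * obs t d m}) :
  (forall i : 'I_d, (i < m)%N || (f i).1) -> Psi (Psi_inv f) = f.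
Proof.
move=> Hf; apply/ffunP => i; rewrite ffunE [RHS]surjective_pairing; congr (_, _).
  rewrite /bitw; case E: (bitR t m i) => [r|].
    rewrite ffunE (bitR_Some E) fromV_chv insubF //.
  have := bitR_lt t m i; rewrite E /= => /esym/negbT/negbTE Hi.
  by move: (Hf i); rewrite Hi.
apply/ffunP => r'; rewrite !ffunE val_liftR fromV_chv valK //.
Qed.

Lemma sum_obs (R : realType) t d m
  (H : {ffun 'I_d -> bool * obs t d m} -> R) :
  \sum_(w : obs t.+1 d m) H (Psi w) =
  \sum_(f : {ffun 'I_d -> bool * obs t d m} | [forall i : 'I_d, (i < m)%N || (f i).1]) H f.
Proof.
rewrite [RHS](reindex_onto (@Psi t d m) (@Psi_inv t d m)) /=; last first.
  by move=> f /forallP Hf; apply: Psi_invK.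
apply: eq_bigl => w; rewrite PsiK eqxx andbT.
apply/esym/forallP => i; rewrite ffunE /= /bitw.
case E: (bitR t m i) => [r|]; last by rewrite orbT.
by rewrite -(bitR_lt t m i) E.
Qed.

Lemma prod_sum_cond (R : realType) (I J : finType) (P : I -> pred J) (F : I -> J -> R) :
  \sum_(f : {ffun I -> J} | [forall i, P i (f i)]) \prod_i F i (f i)
  = \prod_i \sum_(x | P i x) F i x.
Proof.
rewrite big_mkcond.
under eq_bigr => f _.
  have -> : (if [forall i, P i (f i)] then \prod_i F i (f i) else 0) =
            \prod_i ((P i (f i))%:R * F i (f i)).
    rewrite big_split /= -natr_forall; case: ifP; rewrite ?mul1r ?mul0r //.
  over.
rewrite -(bigA_distr_bigA (fun i x => (P i x)%:R * F i x)) /=.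
apply: eq_bigr => i _; rewrite [RHS]big_mkcond; apply: eq_bigr => x _.
by case: (P i x); rewrite ?mul1r ?mul0r.
Qed.

Lemma kern_ge0 (R : realType) (theta : R) a b : -1 <= theta <= 1 -> 0 <= kern theta a b.
Proof. move=> /andP [h1 h2]; rewrite /kern; case: ifP => _; lra. Qed.

Lemma sum_kern (R : realType) (theta : R) a : \sum_(c : bool) kern theta a c = 1.
Proof. rewrite big_bool /kern; case: a => /=; lra. Qed.

Lemma Ew_ge0 (R : realType) t d (theta : R) l : -1 <= theta <= 1 -> 0 <= @Ew R t d theta l.
Proof.
move=> h; apply: prodr_ge0 => u _; apply: prodr_ge0 => v _; exact: kern_ge0.
Qed.

Lemma mu_ge0 (R : realType) t d m (theta : R) sigma (w : obs t d m) :
  -1 <= theta <= 1 -> 0 <= mu theta sigma w.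
Proof.
move=> h; rewrite mu_consl; apply: sumr_ge0 => l _.
by apply: mulr_ge0; [|apply: mulr_ge0; [|exact: Ew_ge0]]; rewrite ler0n.
Qed.

Lemma vtx0_root d (v : vtx 0 d) : v = rootv 0 d.
Proof. by apply: vseq_inj; apply/eqP; rewrite -size_eq0 -leqn0 size_vseq. Qed.

Lemma revV0_empty d m (r : revV 0 d m) : False.
Proof. by have := valP r; rewrite (vtx0_root (val r)). Qed.

Lemma Ew0 (R : realType) d (theta : R) l : @Ew R 0 d theta l = 1.
Proof.
apply: big1 => u _; apply: big1 => v /existsP [i /eqP E].
by move: (size_vseq v); rewrite -E size_rcons.
Qed.

Lemma mu0 (R : realType) d m (theta : R) sigma (w : obs 0 d m) : mu theta sigma w = 1.
Proof.
rewrite mu_consl.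
have Hc : forall l, consl l w = true.
  by move=> l; apply/forallP => r; case: (revV0_empty r).
under eq_bigr => l _ do rewrite Hc Ew0 mul1r mulr1.
have Hb : bijective (fun b : bool => [ffun _ : vtx 0 d => b]).
  exists (fun l : {ffun vtx 0 d -> bool} => l (rootv 0 d)) => [b|l]; first by rewrite ffunE.
  by apply/ffunP => v; rewrite ffunE (vtx0_root v).
rewrite (reindex _ (onW_bij _ Hb)) /=.
under eq_bigr => b _ do rewrite ffunE.
by rewrite big_bool; case: sigma; rewrite /= ?addr0 ?add0r.
Qed.

Lemma sum_obs0 (R : realType) d m (F : obs 0 d m -> R) :
  \sum_w F w = F [ffun r => false].
Proof.
have E : (fun w : obs 0 d m => true) =1 pred1 [ffun r => false].
  move=> w /=; apply/esym/eqP; apply/ffunP => r; case: (revV0_empty r).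
by rewrite (eq_bigl _ _ E) big_pred1_eq.
Qed.

Lemma sum_swap (R : realType) t d m (alpha : bool -> R) (f : bool -> obs t d m -> R) :
  \sum_(w : obs t d m) \sum_(c : bool) alpha c * f c w = \sum_(c : bool) alpha c * \sum_w f c w.
Proof. by rewrite exchange_big; apply: eq_bigr => c _; rewrite mulr_sumr. Qed.

Lemma sum_pairb (R : realType) t d m (P : pred bool) (F : bool * obs t d m -> R) :
  \sum_(x : bool * obs t d m | P x.1) F x = \sum_(b | P b) \sum_(w : obs t d m) F (b, w).
Proof.
rewrite (pair_big P xpredT (fun b w => F (b, w))) /=.
by apply: eq_big => [x|[b w] _] //=; rewrite andbT.
Qed.

Lemma sumG (R : realType) t d m (theta : R) (i : 'I_d) sigma :
  (forall c, \sum_(w : obs t d m) mu theta c w = 1) ->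
  \sum_(x : bool * obs t d m | (i < m)%N || x.1) Gc theta i sigma x = 1.
Proof.
move=> IH; rewrite (sum_pairb (fun b => (i < m)%N || b)) /Gc /=.
case: (i < m)%N => /=.
  under eq_bigr => b _ do rewrite sum_swap.
  under eq_bigr => b _ do under eq_bigr => c _ do rewrite IH mulr1.
  rewrite !big_bool /= /kern; case: sigma => /=; rewrite ?mulr1 ?mulr0; lra.
rewrite big_mkcond big_bool /= addr0.
under eq_bigr => w _ do under eq_bigr => c _ do rewrite mulr1.
rewrite sum_swap; under eq_bigr => c _ do rewrite IH mulr1.
exact: sum_kern.
Qed.

Lemma sum_mu1 (R : realType) t d m (theta : R) sigma :
  \sum_(w : obs t d m) mu theta sigma w = 1.
Proof.
elim: t sigma => [|t IH] sigma.
  by rewrite sum_obs0 mu0.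
under eq_bigr => w _ do rewrite mu_succ.
rewrite (sum_obs (fun f => \prod_(i < d) Gc theta i sigma (f i))).
rewrite (prod_sum_cond (fun (i : 'I_d) (x : bool * obs t d m) => (i < m)%N || x.1)
   (fun i x => Gc theta i sigma x)).
by apply: big1 => i _; apply: sumG.
Qed.

Lemma sqrt_ge (R : realType) (x y : R) : 0 <= y -> y ^+ 2 <= x -> y <= Num.sqrt x.
Proof.
move=> hy hx; have hx0 : 0 <= x by apply: le_trans hx; exact: sqr_ge0.
by rewrite -(ger0_norm hy) -sqrtr_sqr ler_sqrt.
Qed.

Lemma amgm (R : realType) (a b : R) : 0 <= a -> 0 <= b -> Num.sqrt (a * b) <= (a + b) / 2.
Proof.
move=> ha hb; have h : 0 <= (a + b) / 2 by apply: divr_ge0; lra.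
rewrite -(ger0_norm h) -sqrtr_sqr ler_sqrt; last exact: sqr_ge0.
have -> : ((a + b) / 2) ^+ 2 = a * b + ((a - b) / 2) ^+ 2 by field.
by rewrite lerDl sqr_ge0.
Qed.

Lemma sqrt_prod (R : realType) (I : finType) (F : I -> R) :
  (forall i, 0 <= F i) -> Num.sqrt (\prod_i F i) = \prod_i Num.sqrt (F i).
Proof.
move=> H.
pose K := fun a b : R => 0 <= a /\ Num.sqrt a = b.
suff [] : K (\prod_i F i) (\prod_i Num.sqrt (F i)) by [].
apply: (big_rec2 K); first by split; [exact: ler01 | exact: sqrtr1].
move=> i y1 y2 _ [hy1 <-]; split; first exact: mulr_ge0.
by rewrite sqrtrM.
Qed.

Lemma prod_ge (R : realType) (I : finType) (x e : I -> R) :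
  (forall i, 0 <= x i <= 1) -> (forall i, 1 - e i <= x i) -> (forall i, 0 <= e i) ->
  1 - \sum_i e i <= \prod_i x i.
Proof.
move=> hx he he0.
pose K := fun (p s : R) => [/\ 0 <= p, p <= 1, 0 <= s & 1 - s <= p].
suff [] : K (\prod_i x i) (\sum_i e i) by [].
apply: (big_rec2 K); first by split => //; lra.
move=> i p s _ [h1 h2 h3 h4]; have /andP [h5 h6] := hx i; have h7 := he i; have h8 := he0 i.
split; first exact: mulr_ge0.
- by rewrite -[1]mulr1; apply: ler_pM.
- exact: addr_ge0.
- case: (lerP 0 (1 - s)) => hs.
    have : x i * (1 - s) <= x i * p by apply: ler_wpM2l.
    have : (1 - e i) * (1 - s) <= x i * (1 - s) by apply: ler_wpM2r.
    nra.
  have : 0 <= x i * p by apply: mulr_ge0.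
  lra.
Qed.

Lemma sum_ifm (R : realType) d m (A B : R) : (m <= d)%N ->
  \sum_(i < d) (if (i < m)%N then A else B) = m%:R * A + (d - m)%:R * B.
Proof.
move=> hmd.
have -> : \sum_(i < d) (if (i < m)%N then A else B) =
          \sum_(i < d) ((i < m)%N%:R * (A - B) + B).
  by apply: eq_bigr => i _; case: (i < m)%N; rewrite ?mul1r ?mul0r ?add0r; ring.
rewrite big_split /= -mulr_suml sumr_const card_ord.
have -> : \sum_(i < d) ((i < m)%N%:R : R) = m%:R.
  rewrite (eq_bigr (fun i : 'I_d => if (i < m)%N then (1 : R) else 0)); last first.
    by move=> i _; case: (i < m)%N.
  rewrite -big_mkcond /=.
  rewrite -(big_ord_widen d (fun _ => (1 : R)) hmd) sumr_const card_ord.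
  by rewrite -[RHS]mulr1n.
rewrite natrB // -mulr_natl; ring.
Qed.

Definition rho (R : realType) t d m (theta : R) : R :=
  \sum_(w : obs t d m) Num.sqrt (mu theta true w * mu theta false w).

Lemma Gc_ge0 (R : realType) t d m (theta : R) i sigma (x : bool * obs t d m) :
  -1 <= theta <= 1 -> 0 <= Gc theta i sigma x.
Proof.
move=> h; apply: sumr_ge0 => c _; apply: mulr_ge0; last exact: mu_ge0.
apply: mulr_ge0; first exact: kern_ge0.
by case: (i < m)%N; rewrite ?ler0n.
Qed.

Lemma rho_succ (R : realType) t d m (theta : R) : -1 <= theta <= 1 ->
  rho t.+1 d m theta = \prod_(i < d) \sum_(x : bool * obs t d m | (i < m)%N || x.1)
      Num.sqrt (Gc theta i true x * Gc theta i false x).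
Proof.
move=> h; rewrite /rho.
under eq_bigr => w _.
  rewrite !mu_succ -big_split /= sqrt_prod; last first.
    by move=> i; apply: mulr_ge0; apply: Gc_ge0.
  over.
rewrite (sum_obs (fun f => \prod_(i < d)
   Num.sqrt (Gc theta i true (f i) * Gc theta i false (f i)))).
exact: (prod_sum_cond (fun (i : 'I_d) (x : bool * obs t d m) => (i < m)%N || x.1)
   (fun i x => Num.sqrt (Gc theta i true x * Gc theta i false x))).
Qed.

Lemma sum_sqrt_le1 (R : realType) (I : finType) (P : pred I) (p q : I -> R) :
  (forall i, 0 <= p i) -> (forall i, 0 <= q i) ->
  \sum_(i | P i) p i = 1 -> \sum_(i | P i) q i = 1 ->
  \sum_(i | P i) Num.sqrt (p i * q i) <= 1.
Proof.
move=> hp hq sp sq.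
apply: (le_trans (y := \sum_(i | P i) (p i + q i) / 2)).
  by apply: ler_sum => i _; apply: amgm.
by rewrite -mulr_suml big_split /= sp sq; lra.
Qed.

Lemma rho_ge0 (R : realType) t d m (theta : R) : 0 <= rho t d m theta.
Proof. by apply: sumr_ge0 => w _; exact: sqrtr_ge0. Qed.

Lemma rho_le1 (R : realType) t d m (theta : R) : -1 <= theta <= 1 -> rho t d m theta <= 1.
Proof.
move=> h; apply: sum_sqrt_le1; try (by move=> w; exact: mu_ge0); exact: sum_mu1.
Qed.

Lemma rho0 (R : realType) d m (theta : R) : rho 0 d m theta = 1.
Proof. by rewrite /rho sum_obs0 !mu0 mulr1 sqrtr1. Qed.

Lemma Gc_rev (R : realType) t d m (theta : R) (i : 'I_d) sigma b (w : obs t d m) :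
  (i < m)%N -> Gc theta i sigma (b, w) = kern theta sigma b * mu theta b w.
Proof.
move=> hi; rewrite /Gc hi /= big_bool; case: b => /=; rewrite ?mulr1 ?mulr0 ?mul0r ?add0r ?addr0 //.
Qed.

Lemma Gc_unrev (R : realType) t d m (theta : R) (i : 'I_d) sigma b (w : obs t d m) :
  (m <= i)%N -> Gc theta i sigma (b, w) =
    kern theta sigma true * mu theta true w + kern theta sigma false * mu theta false w.
Proof.
move=> hi; rewrite leqNgt in hi; rewrite /Gc (negbTE hi) big_bool /= !mulr1 //.
Qed.

Lemma factor_rev (R : realType) t d m (theta : R) (i : 'I_d) :
  0 < theta < 1 -> (i < m)%N ->
  1 - theta ^+ 2 <= \sum_(x : bool * obs t d m | (i < m)%N || x.1)
      Num.sqrt (Gc theta i true x * Gc theta i false x).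
Proof.
move=> /andP [h0 h1] hi; rewrite hi (sum_pairb xpredT) /=.
have hk : forall b, ((1 - theta ^+ 2) / 2) ^+ 2 <= kern theta true b * kern theta false b.
  move=> b; have h2 : 0 <= theta ^+ 2 * (1 - theta ^+ 2) by apply: mulr_ge0; nra.
  rewrite /kern; case: b => /=; nra.
apply: (le_trans (y := \sum_(b : bool) \sum_(w : obs t d m)
                ((1 - theta ^+ 2) / 2) * mu theta b w)).
  rewrite big_bool /= -!mulr_sumr !sum_mu1; lra.
apply: ler_sum => b _; apply: ler_sum => w _.
rewrite !Gc_rev // mulrACA sqrtrM; last first.
  by apply: mulr_ge0; apply: kern_ge0; apply/andP; split; lra.
rewrite -expr2 sqrtr_sqr ger0_norm; last by apply: mu_ge0; apply/andP; split; lra.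
apply: ler_wpM2r; first by apply: mu_ge0; apply/andP; split; lra.
by apply: sqrt_ge; [nra | exact: hk].
Qed.

Lemma hell_point (R : realType) (theta P Q : R) : 0 <= P -> 0 <= Q -> 0 <= theta <= 1 ->
  (P + Q) / 2 - theta ^+ 2 * ((P + Q) / 2 - Num.sqrt (P * Q)) <=
  Num.sqrt ((((1 + theta) / 2) * P + ((1 - theta) / 2) * Q) *
            (((1 - theta) / 2) * P + ((1 + theta) / 2) * Q)).
Proof.
move=> hP hQ /andP [h0 h1].
set g := Num.sqrt (P * Q); set s := (P + Q) / 2.
have hg0 : 0 <= g by exact: sqrtr_ge0.
have hg2 : g ^+ 2 = P * Q by rewrite sqr_sqrtr //; exact: mulr_ge0.
have hgs : g <= s by exact: amgm.
have ht2 : theta ^+ 2 <= 1 by nra.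
have ht0 : 0 <= theta ^+ 2 by exact: sqr_ge0.
apply: sqrt_ge; first by nra.
have -> : (((1 + theta) / 2) * P + ((1 - theta) / 2) * Q) *
          (((1 - theta) / 2) * P + ((1 + theta) / 2) * Q) =
          (1 - theta ^+ 2) * s ^+ 2 + theta ^+ 2 * g ^+ 2.
  by rewrite hg2 /s; field.
have -> : (1 - theta ^+ 2) * s ^+ 2 + theta ^+ 2 * g ^+ 2 =
   (s - theta ^+ 2 * (s - g)) ^+ 2 + theta ^+ 2 * (1 - theta ^+ 2) * (s - g) ^+ 2.
  by ring.
rewrite lerDl; apply: mulr_ge0; last exact: sqr_ge0.
apply: mulr_ge0 => //; lra.
Qed.

Lemma factor_unrev (R : realType) t d m (theta : R) (i : 'I_d) :
  0 < theta < 1 -> (m <= i)%N ->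
  1 - theta ^+ 2 * (1 - rho t d m theta) <=
  \sum_(x : bool * obs t d m | (i < m)%N || x.1)
      Num.sqrt (Gc theta i true x * Gc theta i false x).
Proof.
move=> /andP [h0 h1] hi.
have hi' : (i < m)%N = false by rewrite ltnNge hi.
have hth : -1 <= theta <= 1 by apply/andP; split; lra.
rewrite hi' (sum_pairb id) /= big_mkcond big_bool /= addr0.
apply: (le_trans (y := \sum_(w : obs t d m)
   ((mu theta true w + mu theta false w) / 2 - theta ^+ 2 *
     ((mu theta true w + mu theta false w) / 2 -
      Num.sqrt (mu theta true w * mu theta false w))))).
  rewrite sumrB -mulr_sumr sumrB -!mulr_suml big_split /= !sum_mu1 /rho.
  lra.
apply: ler_sum => w _; rewrite !Gc_unrev //.
rewrite /kern /=.
apply: hell_point; try exact: mu_ge0.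
by apply/andP; split; lra.
Qed.

Lemma h_bound (R : realType) t d m (theta : R) :
  (m <= d)%N -> 0 < theta < 1 -> (d - m)%:R * theta ^+ 2 < 1 ->
  1 - rho t d m theta <= m%:R * theta ^+ 2 / (1 - (d - m)%:R * theta ^+ 2).
Proof.
move=> hmd hth ha.
have hth' : -1 <= theta <= 1 by case/andP: hth => h0 h1; apply/andP; split; lra.
set a := (d - m)%:R * theta ^+ 2 in ha *.
have ha0 : 0 <= a by apply: mulr_ge0; [rewrite ler0n | exact: sqr_ge0].
have hc0 : 0 <= m%:R * theta ^+ 2 by apply: mulr_ge0; [rewrite ler0n | exact: sqr_ge0].
have hD : 0 < 1 - a by lra.
elim: t => [|t IH].
  by rewrite rho0 subrr; apply: divr_ge0 => //; lra.
rewrite rho_succ //.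
set e := fun i : 'I_d => if (i < m)%N then theta ^+ 2 else theta ^+ 2 * (1 - rho t d m theta).
have hrho := rho_le1 t d m hth'.
have := prod_ge (e := e) (x := fun i : 'I_d => \sum_(x : bool * obs t d m | (i < m)%N || x.1)
      Num.sqrt (Gc theta i true x * Gc theta i false x)).
move=> /(_ _ _ _) H.
have {H} H : 1 - \sum_i e i <= \prod_(i < d) \sum_(x : bool * obs t d m | (i < m)%N || x.1)
      Num.sqrt (Gc theta i true x * Gc theta i false x).
  apply: H.
  - move=> i; apply/andP; split.
      by apply: sumr_ge0 => x _; exact: sqrtr_ge0.
    apply: sum_sqrt_le1; try (by move=> x; exact: Gc_ge0); apply: sumG => c; exact: sum_mu1.
  - move=> i; rewrite /e /=; case: (boolP (i < m)%N) => hi.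
      by have := factor_rev t hth hi; rewrite hi.
    have hi' : (m <= i)%N by rewrite leqNgt.
    by have := factor_unrev t hth hi'; rewrite (negbTE hi).
  - move=> i; rewrite /e; case: ifP => _; first exact: sqr_ge0.
    by apply: mulr_ge0; [exact: sqr_ge0 | lra].
rewrite /e sum_ifm // in H.
set K := m%:R * theta ^+ 2 / (1 - a) in IH *.
have hK : K = m%:R * theta ^+ 2 + a * K by rewrite /K; field; lra.
have h3 : (d - m)%:R * (theta ^+ 2 * (1 - rho t d m theta)) <= a * K.
  rewrite /a -mulrA; apply: ler_wpM2l; first by rewrite ler0n.
  by apply: ler_wpM2l; first exact: sqr_ge0.
lra.
Qed.

Lemma cauchy (R : realType) (I : finType) (a b : I -> R) :
  (\sum_i a i * b i) ^+ 2 <= (\sum_i a i ^+ 2) * (\sum_i b i ^+ 2).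
Proof.
set A := \sum_i a i ^+ 2; set B := \sum_i b i ^+ 2; set C := \sum_i a i * b i.
have hA : 0 <= A by apply: sumr_ge0 => i _; exact: sqr_ge0.
have H0 : 0 <= \sum_i (A * b i - C * a i) ^+ 2 by apply: sumr_ge0 => i _; exact: sqr_ge0.
rewrite (eq_bigr (fun i => A ^+ 2 * b i ^+ 2 - (2 * A * C) * (a i * b i) + C ^+ 2 * a i ^+ 2))
  in H0; last by move=> i _; ring.
rewrite big_split sumrB /= -!mulr_sumr -/A -/B -/C in H0.
case: (ltrP 0 A) => hA0.
  have : 0 <= A * (A * B - C ^+ 2) by rewrite -[X in _ <= X]/(_) ; nra.
  by rewrite pmulr_rge0 // subr_ge0.
have hA00 : A = 0 by apply/eqP; rewrite eq_le hA0 hA.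
have Ha : forall i, a i = 0.
  move=> i; have : A == 0 by rewrite hA00.
  rewrite psumr_eq0; last by move=> j _; exact: sqr_ge0.
  move/allP => /(_ i (mem_index_enum i)) /=; rewrite sqrf_eq0 => /eqP //.
have -> : C = 0 by rewrite /C big1 // => i _; rewrite Ha mul0r.
by rewrite hA00 expr0n /= mul0r.
Qed.

Lemma tv_bound (R : realType) t d m (theta : R) : -1 <= theta <= 1 ->
  dTV t d m theta ^+ 2 <= 2 * (1 - rho t d m theta).
Proof.
move=> hth.
set p := @mu R t d m theta true; set q := @mu R t d m theta false.
have hp : forall w, 0 <= p w by move=> w; exact: mu_ge0.
have hq : forall w, 0 <= q w by move=> w; exact: mu_ge0.
have E : forall w, `|p w - q w| =
   `|Num.sqrt (p w) - Num.sqrt (q w)| * (Num.sqrt (p w) + Num.sqrt (q w)).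
  move=> w.
  have hs : 0 <= Num.sqrt (p w) + Num.sqrt (q w) by apply: addr_ge0; exact: sqrtr_ge0.
  rewrite -[X in _ = _ * X](ger0_norm hs) -normrM.
  congr `|_|.
  rewrite -{1}(sqr_sqrtr (hp w)) -{1}(sqr_sqrtr (hq w)); ring.
rewrite /dTV; under eq_bigr => w _ do rewrite E.
have hcs := cauchy (fun w => `|Num.sqrt (p w) - Num.sqrt (q w)|)
                   (fun w => Num.sqrt (p w) + Num.sqrt (q w)).
have S1 : \sum_w `|Num.sqrt (p w) - Num.sqrt (q w)| ^+ 2 = 2 - 2 * rho t d m theta.
  rewrite (eq_bigr (fun w => p w + q w - 2 * Num.sqrt (p w * q w))); last first.
    move=> w _; rewrite real_normK ?num_real // sqrtrM // sqrrB !sqr_sqrtr //; ring.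
  by rewrite sumrB big_split /= !sum_mu1 -mulr_sumr.
have S2 : \sum_w (Num.sqrt (p w) + Num.sqrt (q w)) ^+ 2 = 2 + 2 * rho t d m theta.
  rewrite (eq_bigr (fun w => p w + q w + 2 * Num.sqrt (p w * q w))); last first.
    move=> w _; rewrite sqrtrM // sqrrD !sqr_sqrtr //; ring.
  by rewrite big_split big_split /= !sum_mu1 -mulr_sumr.
rewrite S1 S2 in hcs.
have h0 := rho_ge0 t d m theta; have h1 := rho_le1 t d m hth.
rewrite exprMn.
set X := \sum_w _ in hcs *.
have hinv : (2^-1 : R) ^+ 2 = 1 / 4 by field.
rewrite hinv.
nra.
Qed.

Lemma ln_lb (R : realType) (x : R) : 0 < x < 1 -> x <= ln (1 + 4 * x / (1 - x)).
Proof.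
move=> /andP [h0 h1].
have hE : sequences.expR x <= 1 + 4 * x / (1 - x).
  have h2 := expR_ge1Dx (- x); rewrite expRN in h2.
  have h3 : 0 < sequences.expR x by exact: expR_gt0.
  have h4 : sequences.expR x * (1 - x) <= 1.
    apply: le_trans (ler_wpM2l (ltW h3) h2) _.
    by rewrite mulfV ?gt_eqF.
  have -> : 1 + 4 * x / (1 - x) = (1 + 3 * x) / (1 - x) by field; lra.
  rewrite ler_pdivlMr; last lra.
  nra.
rewrite -[X in X <= _]expRK ler_ln // posrE ?expR_gt0 //.
apply: (lt_le_trans (expR_gt0 x)) hE.
Qed.

Lemma err_sum (R : realType) t d m (theta : R) (Phi : obs t d m -> bool) :
  -1 <= theta <= 1 ->
  1 - dTV t d m theta <= err theta Phi true + err theta Phi false.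
Proof.
move=> hth; rewrite /err [X in _ <= X + _]big_mkcond [X in _ <= _ + X]big_mkcond -big_split /dTV /=.
apply: (le_trans (y := \sum_w ((mu theta true w + mu theta false w) / 2
                               - `|mu theta true w - mu theta false w| / 2))).
  rewrite sumrB -!mulr_suml big_split /= !sum_mu1; lra.
apply: ler_sum => w _.
have n1 := ler_norm (mu theta true w - mu theta false w).
have n2 := ler_norm (mu theta false w - mu theta true w).
rewrite distrC in n2.
by case: (Phi w) => /=; lra.
Qed.

Lemma key_bound (R : realType) (theta delta : R) (d m t : nat) :
  0 < theta < 1 -> (m <= d)%N -> delta = m%:R / d%:R ->
  1 < delta * d%:R -> (1 - delta) * theta ^+ 2 * d%:R < 1 ->
  dTV t d m theta ^+ 2 <=
    2 * delta * d%:R * ln (1 + 4 * theta ^+ 2 / (1 - theta ^+ 2))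
    / (1 - (1 - delta) * theta ^+ 2 * d%:R).
Proof.
move=> hth hmd hdel h1 h2.
have hd : d%:R != 0 :> R.
  apply/eqP => hd0; move: h1; rewrite hd0 mulr0; lra.
have hm : delta * d%:R = m%:R by rewrite hdel divfK.
have ha : (1 - delta) * theta ^+ 2 * d%:R = (d - m)%:R * theta ^+ 2.
  by rewrite natrB // -hm; ring.
rewrite ha in h2 *; rewrite -(mulrA 2 delta) hm.
have hth' : -1 <= theta <= 1 by case/andP: hth => a b; apply/andP; split; lra.
have hT := tv_bound t d m hth'.
have hH := h_bound t hmd hth h2.
have hx : 0 < theta ^+ 2 < 1 by case/andP: hth => a b; apply/andP; split; nra.
have hL := ln_lb hx.
set L := ln _ in hL *.
set a := (d - m)%:R * theta ^+ 2 in h2 hH *.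
have hD : 0 <= (1 - a)^-1 by rewrite invr_ge0; lra.
have hm0 : 0 <= m%:R :> R by rewrite ler0n.
have : m%:R * theta ^+ 2 / (1 - a) <= m%:R * L / (1 - a).
  by apply: ler_wpM2r => //; apply: ler_wpM2l.
lra.
Qed.

Unset Implicit Arguments.

Theorem theorem3 (R : realType) :
  (forall (theta delta : R) (d m t : nat),
      0 < theta < 1 -> (m <= d)%N -> delta = m%:R / d%:R -> (0 < t)%N ->
      1 < delta * d%:R ->
      (1 - delta) * theta ^+ 2 * d%:R < 1 ->
      2 * delta * d%:R * ln (1 + 4 * theta ^+ 2 / (1 - theta ^+ 2))
        < (1 - (1 - delta) * theta ^+ 2 * d%:R) ^+ 2 ->
      dTV t d m theta ^+ 2 <=
        2 * delta * d%:R * ln (1 + 4 * theta ^+ 2 / (1 - theta ^+ 2))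
        / (1 - (1 - delta) * theta ^+ 2 * d%:R)) /\
  (exists C : R, 0 < C /\
    forall (theta delta : R) (d m t : nat),
      0 < theta < 1 -> (m <= d)%N -> delta = m%:R / d%:R -> (0 < t)%N ->
      1 < delta * d%:R ->
      (1 - delta) * theta ^+ 2 * d%:R < 1 ->
      2 * delta * d%:R * ln (1 + 4 * theta ^+ 2 / (1 - theta ^+ 2))
        < (1 - (1 - delta) * theta ^+ 2 * d%:R) ^+ 2 ->
      forall Phi : obs t d m -> bool,
        1 / 2 - C * Num.sqrt (delta * d%:R
            * ln (1 + 4 * theta ^+ 2 / (1 - theta ^+ 2))
            / (1 - (1 - delta) * theta ^+ 2 * d%:R))
        <= Num.max (err theta Phi true) (err theta Phi false)).
Proof.
split.
  by move=> theta delta d m t hth hmd hdel _ h1 h2 _; apply: key_bound.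
exists 1; split; first exact: ltr01.
move=> theta delta d m t hth hmd hdel _ h1 h2 _ Phi.
have hB := key_bound t hth hmd hdel h1 h2.
have hth' : -1 <= theta <= 1 by case/andP: hth => a b; apply/andP; split; lra.
have hE := err_sum Phi hth'.
have hx : 0 < theta ^+ 2 < 1 by case/andP: hth => a b; apply/andP; split; nra.
have hL := ln_lb hx.
set L := ln _ in hB hL *.
set D := 1 - (1 - delta) * theta ^+ 2 * d%:R in hB h2 *.
set X := delta * d%:R * L / D.
have hd0 : 0 <= delta * d%:R by exact: ltW (lt_trans ltr01 h1).
have hD : 0 < D by rewrite /D subr_gt0.
have hX : 0 <= X.
  apply: divr_ge0; last exact: ltW.
  apply: mulr_ge0 => //; apply: le_trans hL; exact: sqr_ge0.
have hT0 : 0 <= dTV t d m theta.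
  apply: mulr_ge0; first by rewrite invr_ge0; lra.
  by apply: sumr_ge0 => w _; exact: normr_ge0.
have hBX : dTV t d m theta ^+ 2 <= 2 * X.
  by move: hB; have -> : 2 * delta * d%:R * L / D = 2 * X by rewrite /X; ring.
clearbody X.
have hT : dTV t d m theta <= 2 * Num.sqrt X.
  have -> : 2 * Num.sqrt X = Num.sqrt (2 ^+ 2 * X).
    by rewrite sqrtrM ?sqr_ge0 // sqrtr_sqr ger0_norm.
  apply: sqrt_ge => //.
  nra.
have m1 : err theta Phi true <= Num.max (err theta Phi true) (err theta Phi false).
  by rewrite le_max lexx.
have m2 : err theta Phi false <= Num.max (err theta Phi true) (err theta Phi false).
  by rewrite le_max lexx orbT.
lra.
Qed.
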